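(* Let $G$ be a bridgeless cubic graph, let $M_1,M_2,M_3$ be 1-factors of $G$, and let $G_c$ be the $k$-core of $G$ with respect to $M_1,M_2,M_3$, where $k$ is a positive integer. Then $|\overline{M_1}|_{odd}+|\overline{M_2}|_{odd}+|\overline{M_3}|_{odd}\leq 2k$. Moreover, if equality holds, then $G_c$ is a Petersen core.
   Context: Graphs may have multiple edges and loops. A 1-factor is a spanning 1-regular subgraph (identified with its edge set). For 1-factors $M_1,M_2,M_3$ of a cubic graph $G$, let $E_i$ ($i=0,1,2,3$) be the set of edges of $G$ lying in precisely $i$ of $M_1,M_2,M_3$ (counted as a list). The core $G_c$ with respect to $M_1,M_2,M_3$ is the subgraph of $G$ induced by the edge set $E_0\cup E_2\cup E_3$; it is a $k$-core if $|E_0|=k$. The core is cyclic if it is a union of pairwise vertex-disjoint circuits. $G_c$ is a Petersen core (with respect to $M_1,M_2,M_3$) if (1) $G_c$ is cyclic, and (2) for every path $P$ of length 5 in $G_c$ there do not exist two distinct edges $e_1,e_2$ of $P$ and indices $1\le i<j\le 3$ with $e_1,e_2\in M_i\cap M_j$. For a 1-factor $M$ of $G$, $\overline{M}$ denotes the complementary 2-factor $G-M$, and $|\overline{M}|_{odd}$ the number of its odd components (odd circuits). *)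

(* Defs.v *)
(* Finite multigraphs (multiple edges and loops allowed):
   vertex type V, edge type E, each edge e has end-vertices src e and tgt e
   (a loop has src e = tgt e). *)
From mathcomp Require Import all_boot.
Set Implicit Arguments. Unset Strict Implicit. Unset Printing Implicit Defensive.

Section Graphs.
Variables (V E : finType) (src tgt : E -> V).

Definition joins (e : E) (x y : V) : bool :=
  ((src e == x) && (tgt e == y)) || ((src e == y) && (tgt e == x)).

(* degree of v in the spanning subgraph with edge set S (a loop counts twice) *)
Definition deg_in (S : {set E}) (v : V) : nat :=
  \sum_(e in S) ((src e == v) + (tgt e == v)).

Definition cubic : Prop := forall v, deg_in [set: E] v = 3.

Definition one_factor (M : {set E}) : Prop := forall v, deg_in M v = 1.

Definition adj_without (e : E) : rel V :=
  fun x y => [exists f, (f != e) && joins f x y].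

Definition bridge (e : E) : bool := ~~ connect (adj_without e) (src e) (tgt e).

Definition bridgeless : Prop := forall e, ~~ bridge e.

Definition adj_compl (M : {set E}) : rel V :=
  fun x y => [exists f, (f \notin M) && joins f x y].

Definition compl_components (M : {set E}) : {set {set V}} :=
  [set [set y | connect (adj_compl M) x y] | x : V].

Definition comp_edges (M : {set E}) (C : {set V}) : {set E} :=
  [set e | (e \notin M) && (src e \in C)].

(* |bar M|_odd : number of odd circuits (components with an odd number of
   edges) of the complementary 2-factor G - M *)
Definition odd_count (M : {set E}) : nat :=
  #|[set C in compl_components M | odd #|comp_edges M C|]|.

Definition mult (M1 M2 M3 : {set E}) (e : E) : nat :=
  (e \in M1) + (e \in M2) + (e \in M3).

Definition Ei (M1 M2 M3 : {set E}) (i : nat) : {set E} :=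
  [set e | mult M1 M2 M3 e == i].

Definition core_edges (M1 M2 M3 : {set E}) : {set E} :=
  Ei M1 M2 M3 0 :|: Ei M1 M2 M3 2 :|: Ei M1 M2 M3 3.

Definition core_vertices (M1 M2 M3 : {set E}) : {set V} :=
  [set v | [exists e in core_edges M1 M2 M3, (src e == v) || (tgt e == v)]].

Definition is_k_core (M1 M2 M3 : {set E}) (k : nat) : Prop :=
  #|Ei M1 M2 M3 0| = k.

(* cyclic: union of pairwise vertex-disjoint circuits, i.e. every vertex of
   the core has degree exactly 2 in the core *)
Definition cyclic_core (M1 M2 M3 : {set E}) : Prop :=
  forall v, v \in core_vertices M1 M2 M3 -> deg_in (core_edges M1 M2 M3) v = 2.

Definition core_path5 (M1 M2 M3 : {set E}) (p : 'I_6 -> V) (q : 'I_5 -> E) : Prop :=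
  injective p /\
  forall i : 'I_5, q i \in core_edges M1 M2 M3 /\
                   joins (q i) (p (widen_ord (leqnSn 5) i)) (p (lift ord0 i)).

Definition both_in (A B : {set E}) (e1 e2 : E) : bool :=
  (e1 \in A :&: B) && (e2 \in A :&: B).

Definition petersen_core (M1 M2 M3 : {set E}) : Prop :=
  cyclic_core M1 M2 M3 /\
  forall (p : 'I_6 -> V) (q : 'I_5 -> E), core_path5 M1 M2 M3 p q ->
    ~ (exists i j : 'I_5, i != j /\
         [|| both_in M1 M2 (q i) (q j), both_in M1 M3 (q i) (q j)
           | both_in M2 M3 (q i) (q j)]).

End Graphs.

(* Main.v *)
Require Import Defs.
From mathcomp Require Import all_boot zify.
Set Implicit Arguments. Unset Strict Implicit. Unset Printing Implicit Defensive.


Section Deg.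
Variables (V E : finType) (src tgt : E -> V).

Definition inc (e : E) (v : V) : nat := (src e == v) + (tgt e == v).
Local Notation deg := (deg_in src tgt).

Lemma card_sumP (T : finType) (A : {pred T}) : #|A| = \sum_x (x \in A).
Proof. by rewrite -sum1_card big_mkcond /=; apply: eq_bigr => x _; case: (x \in A). Qed.

Lemma card_setP (T : finType) (P : {set T}) (Q : pred T) :
  #|[set x in P | Q x]| = \sum_(x in P) Q x.
Proof.
rewrite card_sumP [RHS]big_mkcond /=; apply: eq_bigr => x _; rewrite !inE.
by case: (x \in P).
Qed.

Lemma degE (S : {set E}) (v : V) : deg S v = \sum_e (e \in S) * inc e v.
Proof. rewrite /deg_in big_mkcond /=; apply: eq_bigr => e _; by case: (e \in S); rewrite ?mul1n ?mul0n. Qed.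

Lemma deg_le (S T : {set E}) (v : V) : S \subset T -> deg S v <= deg T v.
Proof.
move=> /subsetP sST; rewrite !degE; apply: leq_sum => e _.
case eS: (e \in S); last by [].
by rewrite (sST _ eS).
Qed.

Lemma deg_UI (S T : {set E}) (v : V) : deg S v + deg T v = deg (S :|: T) v + deg (S :&: T) v.
Proof.
rewrite !degE -!big_split /=; apply: eq_bigr => e _; rewrite !inE.
by case: (e \in S); case: (e \in T); rewrite /= ?mul1n ?mul0n ?addn0.
Qed.

Lemma deg_ge1 (S : {set E}) v e : e \in S -> (src e == v) || (tgt e == v) -> 0 < deg S v.
Proof.
move=> eS he; rewrite /deg_in (bigD1 e) //=; move: he; rewrite /inc.
by case: (src e == v); case: (tgt e == v).
Qed.

Lemma deg_ex (S : {set E}) v : 0 < deg S v -> exists e, e \in S /\ ((src e == v) || (tgt e == v)).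
Proof.
move=> h; case: (boolP [exists e, (e \in S) && ((src e == v) || (tgt e == v))]) => [/existsP [e /andP [? ?]]|/existsPn H]; first by exists e.
have : deg S v == 0.
  rewrite /deg_in sum_nat_eq0; apply/forallP => e; apply/implyP => eS.
  by move: (H e); rewrite eS /=; case: (src e == v); case: (tgt e == v).
by move/eqP=> h0; move: h; rewrite h0.
Qed.

Lemma deg_two (S : {set E}) v e f : e != f -> e \in S -> f \in S ->
  (src e == v) || (tgt e == v) -> (src f == v) || (tgt f == v) -> 1 < deg S v.
Proof.
move=> nef eS fS he hf; rewrite /deg_in (bigD1 e) //= (bigD1 f) /=; last by rewrite fS eq_sym.
move: he hf; case: (src e == v); case: (tgt e == v); case: (src f == v); case: (tgt f == v) => //= _ _; lia.
Qed.

End Deg.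


Section Comp.
Variables (V E : finType) (src tgt : E -> V).
Local Notation deg := (deg_in src tgt).
Local Notation adjC := (adj_compl src tgt).
Local Notation comps := (compl_components src tgt).
Implicit Types (A S : {set E}) (K : {set V}) (e : E) (v x y : V).

Definition cls (A : {set E}) (x : V) : {set V} := [set y | connect (adjC A) x y].
Definition ce (S : {set E}) (K : {set V}) := #|[set e in S | src e \in K]|.

Lemma joinsC e x y : joins src tgt e x y = joins src tgt e y x.
Proof. by rewrite /joins orbC. Qed.

Lemma adjC_sym A : symmetric (adjC A).
Proof. by move=> x y; rewrite /adj_compl; apply: eq_existsb => f; rewrite joinsC. Qed.

Lemma adjC_edge A e : e \notin A -> adjC A (src e) (tgt e).
Proof. by move=> eA; apply/existsP; exists e; rewrite eA /joins !eqxx. Qed.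

Lemma cls_closed A x e : e \notin A -> (src e \in cls A x) = (tgt e \in cls A x).
Proof.
move=> eA; rewrite !inE; apply/idP/idP => h.
  by apply: connect_trans h (connect1 (adjC_edge eA)).
by apply: connect_trans h (connect1 _); rewrite adjC_sym adjC_edge.
Qed.

Lemma cls_self A x : x \in cls A x.
Proof. by rewrite inE connect0. Qed.

Lemma cls_eq A x y : y \in cls A x -> cls A y = cls A x.
Proof.
rewrite inE => h; apply/setP => z; rewrite !inE.
by rewrite (same_connect (sym_connect_sym (adjC_sym A)) h).
Qed.

Lemma cls_comp A x : cls A x \in comps A.
Proof. by apply: imset_f. Qed.

Lemma in_comp A K v : K \in comps A -> v \in K -> K = cls A v.
Proof. by case/imsetP => x _ -> h; rewrite (cls_eq h). Qed.

Lemma comp_cls A K : K \in comps A -> exists x, K = cls A x.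
Proof. by case/imsetP => x _ ->; exists x. Qed.

Lemma PS A v (h : {set V} -> nat) :
  \sum_(K in comps A) (v \in K) * h K = h (cls A v).
Proof.
rewrite (bigD1 (cls A v)) ?cls_comp //= cls_self mul1n big1 ?addn0 // => K /andP [HK Hne].
case Hv: (v \in K); last by rewrite mul0n.
by rewrite (in_comp HK Hv) eqxx in Hne.
Qed.

Lemma sum_h_ce A S (h : {set V} -> nat) :
  \sum_(K in comps A) h K * ce S K = \sum_(e in S) h (cls A (src e)).
Proof.
rewrite /ce.
under eq_bigr => K _ do rewrite card_setP big_distrr /=.
rewrite exchange_big /=; apply: eq_bigr => e _.
rewrite -(PS A (src e) h); apply: eq_bigr => K _; by rewrite mulnC.
Qed.

Lemma sum_ce A S : \sum_(K in comps A) ce S K = #|S|.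
Proof.
have := sum_h_ce A S (fun _ => 1); rewrite sum1_card => <-.
by apply: eq_bigr => K _; rewrite mul1n.
Qed.

Lemma sum_mem (K : {set V}) a : \sum_(v in K) (a == v) = (a \in K).
Proof.
rewrite big_mkcond /= (bigD1 a) //= eqxx big1 ?addn0; first by case: (a \in K).
by move=> v /negbTE nav; rewrite eq_sym nav; case: (v \in K).
Qed.

Lemma L1 S (K : {set V}) :
  \sum_(v in K) deg S v = \sum_(e in S) ((src e \in K) + (tgt e \in K)).
Proof.
rewrite /deg_in exchange_big /=; apply: eq_bigr => e _.
by rewrite big_split /= !sum_mem.
Qed.

Lemma L1c A x S : S \subset ~: A ->
  \sum_(v in cls A x) deg S v = 2 * ce S (cls A x).
Proof.
move=> /subsetP sA; rewrite L1 /ce card_setP big_distrr /=; apply: eq_bigr => e eS.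
have : e \notin A by have := sA e eS; rewrite inE.
by move/(cls_closed x) <-; case: (src e \in cls A x).
Qed.

End Comp.


Section Loc.
Variables (V E : finType) (src tgt : E -> V).
Local Notation deg := (deg_in src tgt).
Local Notation adjC := (adj_compl src tgt).
Local Notation comps := (compl_components src tgt).
Local Notation cls := (cls src tgt).
Local Notation ce := (ce src).
Implicit Types (A B C S Z : {set E}) (K : {set V}) (e : E) (v x y : V).
Hypothesis cub : cubic src tgt.

Lemma oddE n : odd n -> exists t, n = 2 * t + 1.
Proof. move=> h; exists n./2; rewrite -[n in LHS]odd_double_half h -muln2; lia. Qed.

Lemma evenE n : ~~ odd n -> exists t, n = 2 * t.
Proof. move=> h; exists n./2; rewrite -[n in LHS]odd_double_half (negbTE h) -muln2; lia. Qed.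

Lemma deg0 v : deg set0 v = 0.
Proof. by rewrite /deg_in big_pred0 // => e; rewrite inE. Qed.

Lemma deg_compl A v : one_factor src tgt A -> deg (~: A) v = 2.
Proof.
move=> hA; have := deg_UI src tgt A (~: A) v.
by rewrite setUCr setICr deg0 hA cub; lia.
Qed.

Lemma deg_AB_le1 A B v : one_factor src tgt A -> deg (A :&: B) v <= 1.
Proof. by move=> hA; rewrite -(hA v); apply: deg_le; apply: subsetIl. Qed.

Lemma bound X W Y v : one_factor src tgt Y ->
  deg (X :&: Y) v + deg (W :&: Y) v <= 1 + deg (X :&: W :&: Y) v.
Proof.
move=> hY; rewrite deg_UI; apply: leq_add.
  by rewrite -(hY v); apply: deg_le; apply/subsetP => e; rewrite !inE => /orP [] /andP [].
rewrite leq_eqVlt; apply/orP; left; apply/eqP; congr deg.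
by apply/setP => e; rewrite !inE; case: (e \in X); case: (e \in W); case: (e \in Y).
Qed.

Lemma vtx_id A B C Z v :
  one_factor src tgt A -> one_factor src tgt B -> one_factor src tgt C ->
  (forall e, (e \in Z) = [&& e \notin A, e \notin B & e \notin C]) ->
  deg Z v = deg (A :&: B) v + deg (A :&: C) v + deg (B :&: C :&: ~: A) v.
Proof.
move=> hA hB hC hZ.
have : deg Z v + deg A v + deg B v + deg C v =
       deg setT v + deg (A :&: B) v + deg (A :&: C) v + deg (B :&: C :&: ~: A) v.
  rewrite !degE -!big_split /=; apply: eq_bigr => e _; rewrite !inE hZ.
  by case: (e \in A); case: (e \in B); case: (e \in C); rewrite /= ?mul1n ?mul0n; lia.
by rewrite hA hB hC cub; lia.
Qed.

Lemma n_card A x : one_factor src tgt A ->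
  #|comp_edges src A (cls A x)| = #|cls A x|.
Proof.
move=> hA.
have h1 : #|comp_edges src A (cls A x)| = ce (~: A) (cls A x).
  by apply: eq_card => e; rewrite !inE.
have := L1c src tgt x (subxx (~: A)).
under eq_bigr => v _ do rewrite deg_compl //.
by rewrite sum_nat_const h1; lia.
Qed.

Lemma nXB A B x : one_factor src tgt A -> one_factor src tgt B ->
  #|comp_edges src A (cls A x)| =
  \sum_(v in cls A x) deg (A :&: B) v + 2 * ce (B :&: ~: A) (cls A x).
Proof.
move=> hA hB; rewrite n_card // -(L1c src tgt x (subsetIr B (~: A))) -big_split /= -sum1_card.
apply: eq_bigr => v _; rewrite deg_UI.
have -> : (A :&: B) :|: (B :&: ~: A) = B.
  by apply/setP => e; rewrite !inE; case: (e \in A); case: (e \in B).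
have -> : (A :&: B) :&: (B :&: ~: A) = set0.
  by apply/setP => e; rewrite !inE; case: (e \in A); case: (e \in B).
by rewrite hB deg0.
Qed.

Lemma zX A B C Z x :
  one_factor src tgt A -> one_factor src tgt B -> one_factor src tgt C ->
  (forall e, (e \in Z) = [&& e \notin A, e \notin B & e \notin C]) ->
  2 * ce Z (cls A x) = \sum_(v in cls A x) deg (A :&: B) v
     + \sum_(v in cls A x) deg (A :&: C) v + 2 * ce (B :&: C :&: ~: A) (cls A x).
Proof.
move=> hA hB hC hZ.
have sZ : Z \subset ~: A by apply/subsetP => e; rewrite hZ inE => /andP [].
rewrite -(L1c src tgt x sZ) -(L1c src tgt x (subsetIr _ (~: A))) -!big_split /=.
by apply: eq_bigr => v _; rewrite (vtx_id v hA hB hC hZ).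
Qed.

Lemma OddZ A B C Z x :
  one_factor src tgt A -> one_factor src tgt B -> one_factor src tgt C ->
  (forall e, (e \in Z) = [&& e \notin A, e \notin B & e \notin C]) ->
  odd #|comp_edges src A (cls A x)| -> 0 < ce Z (cls A x).
Proof.
move=> hA hB hC hZ /oddE [t ht].
have h1 := nXB x hA hB; have h2 := zX x hA hB hC hZ.
lia.
Qed.

End Loc.


Section Good.
Variables (V E : finType) (src tgt : E -> V).
Local Notation deg := (deg_in src tgt).
Local Notation comps := (compl_components src tgt).
Local Notation cls := (cls src tgt).
Local Notation ce := (ce src).
Implicit Types (A B C S Z : {set E}) (K : {set V}) (e : E) (v x y : V).
Hypothesis cub : cubic src tgt.

Definition good Z A e :=
  odd #|comp_edges src A (cls A (src e))| && (ce Z (cls A (src e)) == 1).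

Lemma split2 (f : V -> nat) K u v : u \in K -> v \in K -> u != v ->
  \sum_(w in K) f w = f u + f v + \sum_(w | (w \in K) && (w != u) && (w != v)) f w.
Proof.
move=> uK vK uv; rewrite (bigD1 u) //= (bigD1 v) /=; last by rewrite vK eq_sym.
by rewrite addnA.
Qed.

Lemma GF A B C Z e :
  one_factor src tgt A -> one_factor src tgt B -> one_factor src tgt C ->
  (forall e, (e \in Z) = [&& e \notin A, e \notin B & e \notin C]) ->
  src e != tgt e -> e \in Z -> good Z A e ->
  [/\ deg Z (src e) = 1, deg Z (tgt e) = 1,
      deg (A :&: B) (src e) + deg (A :&: C) (src e) = 1,
      deg (A :&: B) (tgt e) + deg (A :&: C) (tgt e) = 1 &
      deg (A :&: B) (src e) = deg (A :&: C) (tgt e)].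
Proof.
move=> hA hB hC hZ nl eZ /andP [hodd /eqP hz].
set u := src e; set v := tgt e; set K := cls A u.
have eA : e \notin A by move: eZ; rewrite hZ => /andP [].
have uK : u \in K by apply: cls_self.
have vK : v \in K by rewrite /v -(cls_closed src tgt u eA).
have sZ : Z \subset ~: A by apply/subsetP => f; rewrite hZ inE => /andP [].
have SZ := L1c src tgt u sZ; rewrite -/K hz in SZ.
have S2 := L1c src tgt u (subsetIr (B :&: C) (~: A)); rewrite -/K in S2.
have h1 := nXB cub u hA hB; have h2 := nXB cub u hA hC; have h3 := zX cub u hA hB hC hZ.
rewrite -/K hz in h1 h2 h3.
rewrite -/K in hodd; move: hodd => /oddE [t ht].
rewrite (split2 _ uK vK nl) in SZ.
rewrite (split2 _ uK vK nl) in S2.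
rewrite (split2 _ uK vK nl) in h1.
rewrite (split2 _ uK vK nl) in h2.
rewrite (split2 (fun w => deg (A :&: B) w) uK vK nl) (split2 (fun w => deg (A :&: C) w) uK vK nl) in h3.
have hr : \sum_(w | (w \in K) && (w != u) && (w != v)) deg Z w =
   \sum_(w | (w \in K) && (w != u) && (w != v)) deg (A :&: B) w +
   \sum_(w | (w \in K) && (w != u) && (w != v)) deg (A :&: C) w +
   \sum_(w | (w \in K) && (w != u) && (w != v)) deg (B :&: C :&: ~: A) w.
  rewrite -!big_split /=; apply: eq_bigr => w _; by rewrite (vtx_id cub w hA hB hC hZ).
have vu := vtx_id cub u hA hB hC hZ; have vv := vtx_id cub v hA hB hC hZ.
have du : 0 < deg Z u by apply: (deg_ge1 eZ); rewrite eqxx.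
have dv : 0 < deg Z v by apply: (deg_ge1 eZ); rewrite eqxx orbT.
split; lia.
Qed.

Lemma EX A B C Z e :
  one_factor src tgt A -> one_factor src tgt B -> one_factor src tgt C ->
  (forall e, (e \in Z) = [&& e \notin A, e \notin B & e \notin C]) ->
  src e != tgt e -> e \in Z -> good Z A e -> good Z B e -> False.
Proof.
move=> hA hB hC hZ nl eZ gA gB.
have hZ' : forall f, (f \in Z) = [&& f \notin B, f \notin A & f \notin C].
  by move=> f; rewrite hZ; case: (f \in A); case: (f \in B).
have [_ _ a1 a2 a3] := GF (B:=B) (C:=C) hA hB hC hZ nl eZ gA.
have [_ _ b1 b2 b3] := GF (B:=A) (C:=C) hB hA hC hZ' nl eZ gB.
rewrite setIC in b1 b2 b3.
have c1 := bound A B (src e) hC; have c2 := bound A B (tgt e) hC.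
have d1 : deg (A :&: B :&: C) (src e) <= deg (A :&: B) (src e) by apply: deg_le; apply: subsetIl.
have d2 : deg (A :&: B :&: C) (tgt e) <= deg (A :&: B) (tgt e) by apply: deg_le; apply: subsetIl.
lia.
Qed.

Lemma G1 A B C Z e f g a b :
  one_factor src tgt A -> one_factor src tgt B -> one_factor src tgt C ->
  (forall e, (e \in Z) = [&& e \notin A, e \notin B & e \notin C]) ->
  src e != tgt e -> e \in Z -> good Z A e ->
  joins src tgt e a b ->
  f \in A -> f \in B -> (src f == a) || (tgt f == a) ->
  g \in A -> g \in B -> (src g == b) || (tgt g == b) -> False.
Proof.
move=> hA hB hC hZ nl eZ gA je fA fB fa gA' gB gb.
have [_ _ a1 a2 a3] := GF (B:=B) (C:=C) hA hB hC hZ nl eZ gA.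
have ea : 0 < deg (A :&: B) a by apply: (deg_ge1 (e := f)) => //; rewrite inE fA fB.
have eb : 0 < deg (A :&: B) b by apply: (deg_ge1 (e := g)) => //; rewrite inE gA' gB.
move: je; rewrite /joins => /orP [] /andP [/eqP sa /eqP tb].
  by rewrite sa tb in a1 a2 a3; lia.
by rewrite sa tb in a1 a2 a3; lia.
Qed.

Lemma G3 A B C Z e f a :
  one_factor src tgt A -> one_factor src tgt B -> one_factor src tgt C ->
  (forall e, (e \in Z) = [&& e \notin A, e \notin B & e \notin C]) ->
  src e != tgt e -> e \in Z -> good Z A e ->
  (a = src e \/ a = tgt e) -> deg (A :&: B :&: C) a = 0 ->
  f \in B -> f \in C -> (src f == a) || (tgt f == a) -> False.
Proof.
move=> hA hB hC hZ nl eZ gA ha h3 fB fC fa.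
have [_ _ a1 a2 _] := GF (B:=B) (C:=C) hA hB hC hZ nl eZ gA.
have ea : 0 < deg (B :&: C) a by apply: (deg_ge1 (e := f)) => //; rewrite inE fB fC.
have c1 := bound A C a hB; have c2 := bound A B a hC.
rewrite -setIA [C :&: B]setIC setIA in c1.
have ab1 : deg (A :&: B) a + deg (A :&: C) a = 1 by case: ha => ->.
lia.
Qed.

End Good.


Section Count.
Variables (V E : finType) (src tgt : E -> V).
Local Notation deg := (deg_in src tgt).
Local Notation comps := (compl_components src tgt).
Local Notation cls := (cls src tgt).
Local Notation ce := (ce src).
Implicit Types (A B C S Z : {set E}) (K : {set V}) (e : E) (v x y : V).
Hypothesis cub : cubic src tgt.

Lemma sum_eq_le (T : finType) (P : {pred T}) (f g : T -> nat) :
  (forall i : T, i \in P -> f i <= g i) -> \sum_(i in P) f i = \sum_(i in P) g i ->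
  forall i : T, i \in P -> f i = g i.
Proof.
move=> hle heq i iP; move: heq; rewrite (bigD1 i) // [in RHS](bigD1 i) //= => heq.
have : \sum_(j | (j \in P) && (j != i)) f j <= \sum_(j | (j \in P) && (j != i)) g j.
  by apply: leq_sum => j /andP [hj _]; apply: hle.
have := hle i iP; lia.
Qed.

Definition Q2 A Z := forall x, 0 < ce Z (cls A x) ->
  odd #|comp_edges src A (cls A x)| /\ ce Z (cls A x) <= 2.

Lemma count_odd A B C Z :
  one_factor src tgt A -> one_factor src tgt B -> one_factor src tgt C ->
  (forall e, (e \in Z) = [&& e \notin A, e \notin B & e \notin C]) ->
  2 * odd_count src tgt A <= #|Z| + \sum_(e in Z) good src tgt Z A e /\
  (2 * odd_count src tgt A = #|Z| + \sum_(e in Z) good src tgt Z A e -> Q2 A Z).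
Proof.
move=> hA hB hC hZ.
set f := fun K => 2 * odd #|comp_edges src A K|.
set h := fun K => odd #|comp_edges src A K| && (ce Z K == 1).
set g := fun K => ce Z K + h K * ce Z K.
have e1 : 2 * odd_count src tgt A = \sum_(K in comps A) f K.
  by rewrite /odd_count card_setP big_distrr.
have e2 : #|Z| + \sum_(e in Z) good src tgt Z A e = \sum_(K in comps A) g K.
  by rewrite big_split /= sum_ce sum_h_ce.
have hle : forall K, K \in comps A -> f K <= g K.
  move=> K /comp_cls [x ->]; rewrite /f /g /h.
  case hod: (odd _) => /=; last by lia.
  have := OddZ cub hA hB hC hZ hod.
  case: (ce Z (cls A x) == 1) /eqP => [->//|]; lia.
split; first by rewrite e1 e2; apply: leq_sum.
rewrite e1 e2 => heq x hx.
have := sum_eq_le hle heq (cls_comp src tgt A x); rewrite /f /g /h.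
case: (odd _) => /=; last by lia.
case: (ce Z (cls A x) == 1) /eqP; lia.
Qed.

Lemma cls_joins A g x y z : g \notin A -> joins src tgt g x y -> x \in cls A z -> y \in cls A z.
Proof.
move=> gA; rewrite /joins => /orP [] /andP [/eqP <- /eqP <-].
  by rewrite (cls_closed src tgt z gA).
by rewrite (cls_closed src tgt z gA).
Qed.

Lemma joins_src g x y : joins src tgt g x y -> src g = x \/ src g = y.
Proof. by rewrite /joins => /orP [] /andP [/eqP -> _]; [left|right]. Qed.

Lemma joins_inc g x y : joins src tgt g x y -> ((src g == x) || (tgt g == x)) /\ ((src g == y) || (tgt g == y)).
Proof. by rewrite /joins => /orP [] /andP [/eqP -> /eqP ->]; rewrite !eqxx ?orbT. Qed.

Lemma D4gen A B C Z a1 a2 a3 a4 q0 q1 q2 q3 q4 :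
  one_factor src tgt A -> one_factor src tgt B -> one_factor src tgt C ->
  (forall e, (e \in Z) = [&& e \notin A, e \notin B & e \notin C]) ->
  Q2 A Z -> a1 != a4 -> q1 != q3 ->
  q0 \in A -> q0 \in B -> (src q0 == a1) || (tgt q0 == a1) ->
  q4 \in A -> q4 \in B -> (src q4 == a4) || (tgt q4 == a4) ->
  q1 \in Z -> joins src tgt q1 a1 a2 ->
  q2 \in B -> q2 \in C -> q2 \notin A -> joins src tgt q2 a2 a3 ->
  q3 \in Z -> joins src tgt q3 a3 a4 -> False.
Proof.
move=> hA hB hC hZ hQ n14 n13 q0A q0B i0 q4A q4B i4 q1Z j1 q2B q2C q2A j2 q3Z j3.
have nA : forall e, e \in Z -> e \notin A by move=> e; rewrite hZ => /andP [].
set K := cls A a1.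
have a1K : a1 \in K by apply: cls_self.
have a2K : a2 \in K by apply: (cls_joins (nA _ q1Z) j1).
have a3K : a3 \in K by apply: (cls_joins q2A j2).
have a4K : a4 \in K by apply: (cls_joins (nA _ q3Z) j3).
have z2 : 1 < ce Z K.
  have s1 : src q1 \in K by case: (joins_src j1) => ->.
  have s3 : src q3 \in K by case: (joins_src j3) => ->.
  apply/card_gt1P; exists q1, q3; split => //; [by rewrite inE q1Z s1 | by rewrite inE q3Z s3].
have e21 : 0 < ce (B :&: C :&: ~: A) K.
  have s2 : src q2 \in K by case: (joins_src j2) => ->.
  apply/card_gt0P; exists q2; by rewrite inE s2 !inE q2B q2C q2A.
have [hod hz] := hQ a1 (ltnW z2).
rewrite -/K in hod hz.
have h1 := nXB cub a1 hA hC; have h3 := zX cub a1 hA hB hC hZ.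
rewrite -/K in h1 h3.
move: hod => /oddE [t ht].
have d1 : 0 < deg (A :&: B) a1 by apply: (deg_ge1 (e := q0)) => //; rewrite inE q0A q0B.
have d4 : 0 < deg (A :&: B) a4 by apply: (deg_ge1 (e := q4)) => //; rewrite inE q4A q4B.
rewrite (split2 (fun w => deg (A :&: B) w) a1K a4K n14) in h3.
clear -h1 h3 ht hz e21 d1 d4.
lia.
Qed.

Lemma noloop : bridgeless src tgt -> forall e, src e != tgt e.
Proof.
move=> hbr e; apply/negP => /eqP hl.
set v := src e.
have h3 := cub v; rewrite /deg_in (bigD1 e) //= -/v -hl eqxx /= in h3.
have : 0 < \sum_(f in [set: E] | f != e) ((src f == v) + (tgt f == v)) by lia.
rewrite lt0n sum_nat_eq0 => /forallPn [f]; rewrite negb_imply => /andP [/andP [_ nfe] hf].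
rewrite (@bigD1 _ _ _ _ f) /= in h3; last by rewrite in_setT nfe.
have hf1 : (src f == v) + (tgt f == v) = 1 by move: hf h3; rewrite eqE /=; lia.
have h0 : forall g, g != e -> g != f -> (src g == v) + (tgt g == v) = 0.
  move=> g nge ngf.
  have : \sum_(i | (i \in [set: E]) && (i != e) && (i != f)) ((src i == v) + (tgt i == v)) == 0 by apply/eqP; lia.
  rewrite sum_nat_eq0 => /forallP /(_ g); rewrite in_setT nge ngf /= => /eqP //.
have cl : closed (adj_without src tgt f) (pred1 v).
  have key : forall x y, adj_without src tgt f x y -> x = v -> y = v.
    move=> x y /existsP [g /andP [ngf jg]] xv.
    case ge: (g == e).
      move/eqP: ge jg => ->; rewrite /joins => /orP [] /andP [/eqP h1 /eqP h2].
        by rewrite -h2 -hl.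
      by rewrite -h1.
    have := h0 g (negbT ge) ngf; move: jg; rewrite /joins xv.
    by case/orP => /andP [/eqP -> /eqP ->]; rewrite eqxx //= addn1.
  move=> x y hxy; rewrite /= !inE; apply/eqP/eqP => [/(key _ _ hxy)//|yv].
  apply: (key y x) => //; move: hxy => /existsP [g /andP [ngf jg]]; apply/existsP; exists g.
  by rewrite ngf joinsC.
have := hbr f; rewrite /bridge negbK => /(closed_connect cl); rewrite !inE.
by move: hf1; case: (src f == v); case: (tgt f == v).
Qed.

End Count.


Lemma joins2 (V E : finType) (src tgt : E -> V) g x y z :
  joins src tgt g x y -> joins src tgt g y z -> x = z.
Proof.
rewrite /joins => /orP [] /andP [/eqP a /eqP b] /orP [] /andP [/eqP c /eqP d]; congruence.
Qed.

Theorem mainTheorem2 (V E : finType) (src tgt : E -> V) (M1 M2 M3 : {set E}) (k : nat) :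
  cubic src tgt -> bridgeless src tgt ->
  one_factor src tgt M1 -> one_factor src tgt M2 -> one_factor src tgt M3 ->
  0 < k -> is_k_core M1 M2 M3 k ->
  odd_count src tgt M1 + odd_count src tgt M2 + odd_count src tgt M3 <= 2 * k /\
  (odd_count src tgt M1 + odd_count src tgt M2 + odd_count src tgt M3 = 2 * k ->
   petersen_core src tgt M1 M2 M3).
Proof.
move=> cub hbr h1 h2 h3 kpos hk.
set Z := Ei M1 M2 M3 0.
have hk' : #|Z| = k by [].
have hZ123 : forall e, (e \in Z) = [&& e \notin M1, e \notin M2 & e \notin M3].
  by move=> e; rewrite !inE /mult; case: (e \in M1); case: (e \in M2); case: (e \in M3).
have hZ132 : forall e, (e \in Z) = [&& e \notin M1, e \notin M3 & e \notin M2].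
  by move=> e; rewrite !inE /mult; case: (e \in M1); case: (e \in M2); case: (e \in M3).
have hZ213 : forall e, (e \in Z) = [&& e \notin M2, e \notin M1 & e \notin M3].
  by move=> e; rewrite !inE /mult; case: (e \in M1); case: (e \in M2); case: (e \in M3).
have hZ231 : forall e, (e \in Z) = [&& e \notin M2, e \notin M3 & e \notin M1].
  by move=> e; rewrite !inE /mult; case: (e \in M1); case: (e \in M2); case: (e \in M3).
have hZ312 : forall e, (e \in Z) = [&& e \notin M3, e \notin M1 & e \notin M2].
  by move=> e; rewrite !inE /mult; case: (e \in M1); case: (e \in M2); case: (e \in M3).
have hZ321 : forall e, (e \in Z) = [&& e \notin M3, e \notin M2 & e \notin M1].
  by move=> e; rewrite !inE /mult; case: (e \in M1); case: (e \in M2); case: (e \in M3).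
have nl := noloop cub hbr.
have [c1 q1] := count_odd cub h1 h2 h3 hZ123.
have [c2 q2] := count_odd cub h2 h1 h3 hZ213.
have [c3 q3] := count_odd cub h3 h1 h2 hZ312.
have ex : \sum_(e in Z) (good src tgt Z M1 e + good src tgt Z M2 e + good src tgt Z M3 e) <= \sum_(e in Z) 1.
  apply: leq_sum => e eZ.
  case g1: (good src tgt Z M1 e); case g2: (good src tgt Z M2 e); case g3: (good src tgt Z M3 e) => //.
  - by case: (EX cub (C:=M3) h1 h2 h3 hZ123 (nl e) eZ g1 g2).
  - by case: (EX cub (C:=M3) h1 h2 h3 hZ123 (nl e) eZ g1 g2).
  - by case: (EX cub (C:=M2) h1 h3 h2 hZ132 (nl e) eZ g1 g3).
  - by case: (EX cub (C:=M1) h2 h3 h1 hZ231 (nl e) eZ g2 g3).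
rewrite sum1_card !big_split /= in ex.
split; first by lia.
move=> heq.
have Q21 := q1 ltac:(lia).
have Q22 := q2 ltac:(lia).
have Q23 := q3 ltac:(lia).
have hle : forall f, f \in Z -> good src tgt Z M1 f + good src tgt Z M2 f + good src tgt Z M3 f <= 1.
  move=> f fZ.
  case g1: (good src tgt Z M1 f); case g2: (good src tgt Z M2 f); case g3: (good src tgt Z M3 f) => //.
  + by case: (EX cub (C:=M3) h1 h2 h3 hZ123 (nl f) fZ g1 g2).
  + by case: (EX cub (C:=M3) h1 h2 h3 hZ123 (nl f) fZ g1 g2).
  + by case: (EX cub (C:=M2) h1 h3 h2 hZ132 (nl f) fZ g1 g3).
  + by case: (EX cub (C:=M1) h2 h3 h1 hZ231 (nl f) fZ g2 g3).
have hsum : \sum_(e in Z) (good src tgt Z M1 e + good src tgt Z M2 e + good src tgt Z M3 e) = \sum_(e in Z) 1.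
  rewrite sum1_card !big_split /=; lia.
have allgood : forall e, e \in Z -> [|| good src tgt Z M1 e, good src tgt Z M2 e | good src tgt Z M3 e].
  move=> e eZ; have := sum_eq_le hle hsum eZ.
  by case: (good src tgt Z M1 e); case: (good src tgt Z M2 e); case: (good src tgt Z M3 e).
clear c1 c2 c3 q1 q2 q3 ex hle hsum heq hk.
set E2 := Ei M1 M2 M3 2; set E3 := Ei M1 M2 M3 3.
have dz : forall e, e \in Z -> deg_in src tgt Z (src e) = 1 /\ deg_in src tgt Z (tgt e) = 1.
  move=> e eZ; case/or3P: (allgood e eZ) => g.
  - by have [? ? _ _ _] := GF cub (B:=M2) (C:=M3) h1 h2 h3 hZ123 (nl e) eZ g.
  - by have [? ? _ _ _] := GF cub (B:=M1) (C:=M3) h2 h1 h3 hZ213 (nl e) eZ g.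
  - by have [? ? _ _ _] := GF cub (B:=M1) (C:=M2) h3 h1 h2 hZ312 (nl e) eZ g.
have vid : forall v, deg_in src tgt Z v = deg_in src tgt E2 v + 2 * deg_in src tgt E3 v.
  move=> v.
  have : deg_in src tgt Z v + deg_in src tgt M1 v + deg_in src tgt M2 v + deg_in src tgt M3 v =
     deg_in src tgt setT v + deg_in src tgt E2 v + deg_in src tgt E3 v + deg_in src tgt E3 v.
    rewrite !degE -!big_split /=; apply: eq_bigr => e _; rewrite !inE /mult.
    by case: (e \in M1); case: (e \in M2); case: (e \in M3); rewrite /= ?mul1n ?mul0n; lia.
  by rewrite h1 h2 h3 cub; lia.
have cid : forall v, deg_in src tgt (core_edges M1 M2 M3) v =
    deg_in src tgt Z v + deg_in src tgt E2 v + deg_in src tgt E3 v.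
  move=> v; rewrite !degE -!big_split /=; apply: eq_bigr => e _; rewrite !inE /mult.
  by case: (e \in M1); case: (e \in M2); case: (e \in M3); rewrite /= ?mul1n ?mul0n; lia.
have dZ1 : forall v, 0 < deg_in src tgt Z v -> deg_in src tgt Z v = 1.
  move=> v /deg_ex [e [eZ /orP [] /eqP <-]]; by have [] := dz e eZ.
have corev : forall v, v \in core_vertices src tgt M1 M2 M3 ->
    [/\ deg_in src tgt Z v = 1, deg_in src tgt E2 v = 1 & deg_in src tgt E3 v = 0].
  move=> v; rewrite inE => /existsP [e /andP [ec ei]].
  have := deg_ge1 ec ei; rewrite cid => hc.
  have hv := vid v; case: (posnP (deg_in src tgt Z v)) => [h0|hp]; first by lia.
  by have := dZ1 v hp => h1v; split; lia.
have cyc : cyclic_core src tgt M1 M2 M3.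
  by move=> v /corev [? ? ?]; rewrite cid; lia.
have t3 : forall x, x \in M1 -> x \in M2 -> x \in M3 -> x \in E3.
  by move=> x; rewrite !inE /mult => -> -> ->.
have D2 : forall e f g a b, e \in Z -> joins src tgt e a b ->
    deg_in src tgt E3 a = 0 ->
    [|| both_in M1 M2 f g, both_in M1 M3 f g | both_in M2 M3 f g] ->
    (src f == a) || (tgt f == a) -> (src g == b) || (tgt g == b) -> False.
  move=> e f g a b eZ je ha hp fa gb.
  have ha' : forall X Y W : {set E}, (forall x, x \in X -> x \in Y -> x \in W -> x \in E3) ->
      deg_in src tgt (X :&: Y :&: W) a = 0.
    move=> X Y W hs; apply/eqP; rewrite -leqn0 -ha; apply: deg_le; apply/subsetP => x.
    by move=> /setIP [/setIP [? ?] ?]; apply: hs.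
  have a_end : a = src e \/ a = tgt e.
    by move: je; rewrite /joins => /orP [] /andP [/eqP -> /eqP ->]; [left|right].
  case/or3P: (allgood e eZ) => g0; move: hp; rewrite /both_in !inE => /or3P [] /andP [/andP [fX fY] /andP [gX gY]].
  - exact: (G1 cub (A:=M1) (B:=M2) (C:=M3) h1 h2 h3 hZ123 (nl e) eZ g0 je fX fY fa gX gY gb).
  - exact: (G1 cub (A:=M1) (B:=M3) (C:=M2) h1 h3 h2 hZ132 (nl e) eZ g0 je fX fY fa gX gY gb).
  - apply: (G3 cub (A:=M1) (B:=M2) (C:=M3) h1 h2 h3 hZ123 (nl e) eZ g0 a_end _ fX fY fa).
    by apply: ha' => x x1 x2 x3; apply: t3.
  - exact: (G1 cub (A:=M2) (B:=M1) (C:=M3) h2 h1 h3 hZ213 (nl e) eZ g0 je fY fX fa gY gX gb).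
  - apply: (G3 cub (A:=M2) (B:=M1) (C:=M3) h2 h1 h3 hZ213 (nl e) eZ g0 a_end _ fX fY fa).
    by apply: ha' => x x1 x2 x3; apply: t3.
  - exact: (G1 cub (A:=M2) (B:=M3) (C:=M1) h2 h3 h1 hZ231 (nl e) eZ g0 je fX fY fa gX gY gb).
  - apply: (G3 cub (A:=M3) (B:=M1) (C:=M2) h3 h1 h2 hZ312 (nl e) eZ g0 a_end _ fX fY fa).
    by apply: ha' => x x1 x2 x3; apply: t3.
  - exact: (G1 cub (A:=M3) (B:=M1) (C:=M2) h3 h1 h2 hZ312 (nl e) eZ g0 je fY fX fa gY gX gb).
  - exact: (G1 cub (A:=M3) (B:=M2) (C:=M1) h3 h2 h1 hZ321 (nl e) eZ g0 je fY fX fa gY gX gb).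
have D4 : forall r0 r1 r2 r3 r4 a1 a2 a3 a4, a1 != a4 -> r1 != r3 ->
    [|| both_in M1 M2 r0 r4, both_in M1 M3 r0 r4 | both_in M2 M3 r0 r4] ->
    (src r0 == a1) || (tgt r0 == a1) -> (src r4 == a4) || (tgt r4 == a4) ->
    r1 \in Z -> joins src tgt r1 a1 a2 -> r2 \in E2 -> joins src tgt r2 a2 a3 ->
    r3 \in Z -> joins src tgt r3 a3 a4 -> deg_in src tgt E3 a1 = 0 -> False.
  move=> r0 r1 r2 r3 r4 a1 a2 a3 a4 n14 n13 hp i0 i4 r1Z j1 r2E j2 r3Z j3 e3.
  have nd : [|| both_in M1 M2 r0 r2, both_in M1 M3 r0 r2 | both_in M2 M3 r0 r2] -> False.
    by move=> H; apply: (D2 r1 r0 r2 a1 a2 r1Z j1 e3 H i0 (joins_inc j2).1).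
  move: r2E; rewrite inE /mult.
  case m1: (r2 \in M1); case m2: (r2 \in M2); case m3: (r2 \in M3) => //= _;
    case/or3P: hp => /andP [/setIP [a0 b0] /setIP [a4' b4']].
  - by apply: nd; rewrite /both_in !inE a0 b0 m1 m2.
  - exact: (D4gen cub h3 h1 h2 hZ312 Q23 n14 n13 b0 a0 i0 b4' a4' i4 r1Z j1 m1 m2 (negbT m3) j2 r3Z j3).
  - exact: (D4gen cub h3 h2 h1 hZ321 Q23 n14 n13 b0 a0 i0 b4' a4' i4 r1Z j1 m2 m1 (negbT m3) j2 r3Z j3).
  - exact: (D4gen cub h2 h1 h3 hZ213 Q22 n14 n13 b0 a0 i0 b4' a4' i4 r1Z j1 m1 m3 (negbT m2) j2 r3Z j3).
  - by apply: nd; rewrite /both_in !inE a0 b0 m1 m3 orbT.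
  - exact: (D4gen cub h2 h3 h1 hZ231 Q22 n14 n13 a0 b0 i0 a4' b4' i4 r1Z j1 m3 m1 (negbT m2) j2 r3Z j3).
  - exact: (D4gen cub h1 h2 h3 hZ123 Q21 n14 n13 a0 b0 i0 a4' b4' i4 r1Z j1 m2 m3 (negbT m1) j2 r3Z j3).
  - exact: (D4gen cub h1 h3 h2 hZ132 Q21 n14 n13 a0 b0 i0 a4' b4' i4 r1Z j1 m3 m2 (negbT m1) j2 r3Z j3).
  - by apply: nd; rewrite /both_in !inE a0 b0 m2 m3 !orbT.
split => //.
move=> p q [pinj hq] [i [j [nij hb]]].
pose P := fun n => p (@inord 5 n).
pose Q := fun n => q (@inord 4 n).
have hQ : forall n, n < 5 -> Q n \in core_edges M1 M2 M3 /\ joins src tgt (Q n) (P n) (P n.+1).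
  move=> n hn; have [hc hj] := hq (inord n); split => //.
  have n6 : n < 6 by lia.
  have n6' : n.+1 < 6 by lia.
  have e1 : widen_ord (leqnSn 5) (@inord 4 n) = @inord 5 n.
    by apply: val_inj; rewrite /= !inordK.
  have e2 : lift ord0 (@inord 4 n) = @inord 5 n.+1.
    by apply: val_inj; rewrite /= /bump leq0n add1n !inordK.
  by rewrite /P /Q -e1 -e2.
have Pinj : forall n m, n < 6 -> m < 6 -> P n = P m -> n = m.
  by move=> n m hn hm /pinj /(congr1 val); rewrite /= !inordK.
have qi : q i = Q i by rewrite /Q inord_val.
have qj : q j = Q j by rewrite /Q inord_val.
rewrite qi qj in hb.
have iv : i < 5 := ltn_ord i.
have jv : j < 5 := ltn_ord j.
have nij' : (i : nat) != j by [].
clearbody P Q; clear hq pinj.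
have cvQ : forall n, n < 5 -> P n \in core_vertices src tgt M1 M2 M3 /\ P n.+1 \in core_vertices src tgt M1 M2 M3.
  move=> n hn; have [hc hj] := hQ n hn; have [i1 i2] := joins_inc hj.
  by split; rewrite inE; apply/existsP; exists (Q n); rewrite hc.
have hZE2 : forall n, n < 5 -> (Q n \in Z) || (Q n \in E2).
  move=> n hn; have [hc hj] := hQ n hn; have [e30 _] := cvQ n hn.
  rewrite /core_edges in hc; case/setUP: hc => [/setUP [h|h]|h3']; first by rewrite h.
    by rewrite h orbT.
  have [_ _ h0] := corev _ e30.
  have := deg_ge1 h3' (joins_inc hj).1; rewrite /E3 in h0; lia.
have alt : forall n, n < 4 -> (Q n \in Z) != (Q n.+1 \in Z).
  move=> n hn.
  have hn1 : n < 5 by lia. have hn2 : n.+1 < 5 by lia.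
  have [_ j0] := hQ n hn1; have [_ j1] := hQ n.+1 hn2.
  have ne : Q n != Q n.+1.
    apply/eqP => eq; rewrite -eq in j1.
    by have := Pinj n n.+2 ltac:(lia) ltac:(lia) (joins2 j0 j1); lia.
  have [_ cv] := cvQ n hn1; have [d1 d2 _] := corev _ cv.
  have ia := (joins_inc j0).2; have ib := (joins_inc j1).1.
  case z1: (Q n \in Z); case z2: (Q n.+1 \in Z) => //.
    by have := deg_two ne z1 z2 ia ib; rewrite d1.
  have e1 : Q n \in E2 by have := hZE2 n hn1; rewrite z1.
  have e2 : Q n.+1 \in E2 by have := hZE2 n.+1 hn2; rewrite z2.
  by have := deg_two ne e1 e2 ia ib; rewrite d2.
have altT : forall n, n < 4 -> (Q n \in Z) = false -> Q n.+1 \in Z.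
  by move=> n hn h; have := alt n hn; rewrite h; case: (Q n.+1 \in Z).
have altF : forall n, n < 4 -> Q n \in Z -> (Q n.+1 \in Z) = false.
  by move=> n hn h; have := alt n hn; rewrite h; case: (Q n.+1 \in Z).
have nz : forall x y, [|| both_in M1 M2 x y, both_in M1 M3 x y | both_in M2 M3 x y] ->
    (x \in Z) = false /\ (y \in Z) = false.
  move=> x y; rewrite /both_in !hZ123 !inE.
  by case/or3P => /andP [/andP [-> ->] /andP [-> ->]]; rewrite ?andbF.
have e3P : forall n, n < 5 -> deg_in src tgt E3 (P n) = 0 /\ deg_in src tgt E3 (P n.+1) = 0.
  move=> n hn; have [c0 c1'] := cvQ n hn.
  by have [_ _ ->] := corev _ c0; have [_ _ ->] := corev _ c1'.
have key : forall a b, a < b -> b < 5 ->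
    [|| both_in M1 M2 (Q a) (Q b), both_in M1 M3 (Q a) (Q b) | both_in M2 M3 (Q a) (Q b)] -> False.
  move=> a b ab b5 hb'; have [na nb] := nz _ _ hb'.
  have d2 : a + 2 = b -> Q a.+1 \in Z -> False.
    move=> hab mZ; subst b; rewrite addn2 in b5 hb'.
    have l1 : a.+1 < 5 := ltnW b5.
    have l0 : a < 5 := ltnW l1.
    have [_ jm] := hQ a.+1 l1.
    have [ez _] := e3P a.+1 l1.
    apply: (D2 (Q a.+1) (Q a) (Q a.+2) (P a.+1) (P a.+2) mZ jm ez hb').
      exact: (joins_inc (hQ a l0).2).2.
    exact: (joins_inc (hQ a.+2 b5).2).1.
  move: a b ab b5 hb' na nb d2 => [|[|[|[|a]]]] [|[|[|[|[|b]]]]] //= ab b5 hb' na nb d2.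
  - by have := altT 0 isT na; rewrite nb.
  - by apply: d2 => //; exact: (altT 0 isT na).
  - have h1' := altT 0 isT na; have h2' := altF 1 isT h1'.
    by have := altT 2 isT h2'; rewrite nb.
  - have h1' := altT 0 isT na; have h2' := altF 1 isT h1'; have h3' := altT 2 isT h2'.
    have q2E : Q 2 \in E2 by have := hZE2 2 isT; rewrite h2'.
    have n14 : P 1 != P 4 by apply/eqP => h14; have := Pinj 1 4 isT isT h14.
    have n13 : Q 1 != Q 3.
      apply/eqP => e13.
      have [s1|s1] := joins_src (hQ 1 isT).2; have [s3|s3] := joins_src (hQ 3 isT).2;
        rewrite e13 in s1; rewrite s1 in s3;
        by first [ have := Pinj 1 3 isT isT s3 | have := Pinj 1 4 isT isT s3
                 | have := Pinj 2 3 isT isT s3 | have := Pinj 2 4 isT isT s3 ].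
    have [e31 _] := e3P 1 isT.
    exact: (D4 (Q 0) (Q 1) (Q 2) (Q 3) (Q 4) (P 1) (P 2) (P 3) (P 4) n14 n13 hb'
      (joins_inc (hQ 0 isT).2).2 (joins_inc (hQ 4 isT).2).1 h1' (hQ 1 isT).2 q2E (hQ 2 isT).2
      h3' (hQ 3 isT).2 e31).
  - by have := altT 1 isT na; rewrite nb.
  - by apply: d2 => //; exact: (altT 1 isT na).
  - have h1' := altT 1 isT na; have h2' := altF 2 isT h1'.
    by have := altT 3 isT h2'; rewrite nb.
  - by have := altT 2 isT na; rewrite nb.
  - by apply: d2 => //; exact: (altT 2 isT na).
  - by have := altT 3 isT na; rewrite nb.
case: (ltngtP i j) => hij.
- exact: (key i j hij jv hb).
- apply: (key j i hij iv).
  have bsym : forall (X Y : {set E}) x y, both_in X Y x y = both_in X Y y x.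
    by move=> X Y x y; rewrite /both_in andbC.
  by move: hb; rewrite (bsym M1 M2) (bsym M1 M3) (bsym M2 M3).
- by rewrite hij eqxx in nij'.
Qed.
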